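(* For every finite metric space $(X,d)$, every $S\subseteq X$, every $p\in(0,1)$ and every $\tau>0$, there exists a $1$-Lipschitz map $\varphi:X\to L_2$ such that for every $x,y\in S$ with $d(x,y)\ge\tau$, $$\|\varphi(x)-\varphi(y)\|_2\ge \frac{\tau\sqrt p}{\zeta(S;p)}.$$
   Context: $L_2$ denotes a Hilbert space. For a finite metric space $(Y,d)$ (here $S$ with the restricted metric), given $\Delta,\zeta>0$ and $p\in(0,1)$, $Y$ admits a random zero set at scale $\Delta$ which is $\zeta$-spreading with probability $p$ if there is a probability distribution $\mu$ over subsets $Z\subseteq Y$ such that for all $x,y\in Y$ with $d(x,y)\ge\Delta$, $\mu\{Z: y\in Z\text{ and } d(x,Z)\ge\Delta/\zeta\}\ge p$. $\zeta(Y;p)$ is the least $\zeta>0$ such that for every $\Delta>0$, $Y$ admits a random zero set at scale $\Delta$ which is $\zeta$-spreading with probability $p$. *)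

(* Defs.v *)
From HB Require Import structures.
From mathcomp Require Import all_boot all_order all_algebra.
From mathcomp Require Import boolp classical_sets reals constructive_ereal ereal.
Set Implicit Arguments. Unset Strict Implicit. Unset Printing Implicit Defensive.
Import Order.TTheory GRing.Theory Num.Theory.
Local Open Scope ring_scope.
Local Open Scope classical_set_scope.

Definition is_metric (R : realType) (T : finType) (d : T -> T -> R) : Prop :=
  [/\ forall x y, 0 <= d x y,
      forall x y, d x y = 0 <-> x = y,
      forall x y, d x y = d y x &
      forall x y z, d x z <= d x y + d y z].

Definition l2norm (R : realType) (n : nat) (v : 'rV[R]_n) : R :=
  Num.sqrt (\sum_(i < n) (v 0 i) ^+ 2).

Definition subset_distr (T : finType) (R : realType) (S : {set T})
    (mu : {ffun {set T} -> R}) : Prop :=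
  [/\ forall Z : {set T}, 0 <= mu Z,
      forall Z : {set T}, ~~ (Z \subset S) -> mu Z = 0 &
      \sum_(Z : {set T}) mu Z = 1].

(* S admits a random zero set at scale Delta which is zeta-spreading with
   probability p: mu{Z : y in Z and d(x,Z) >= Delta/zeta} >= p for all x,y in S
   with d(x,y) >= Delta.  Since y \in Z, Z is nonempty and
   d(x,Z) = min_{z in Z} d(x,z), so d(x,Z) >= r iff d(x,z) >= r for all z in Z. *)
Definition random_zero_set (R : realType) (T : finType) (d : T -> T -> R)
    (S : {set T}) (Delta zeta p : R) : Prop :=
  exists mu : {ffun {set T} -> R}, subset_distr S mu /\
    forall x y, x \in S -> y \in S -> Delta <= d x y ->
      p <= \sum_(Z : {set T} | (y \in Z) && [forall z in Z, Delta / zeta <= d x z])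
             mu Z.

(* Taken as an
   infimum in the extended reals (+oo if no such zeta exists). *)
Definition zeta_sp (R : realType) (T : finType) (d : T -> T -> R)
    (S : {set T}) (p : R) : \bar R :=
  ereal_inf [set (z%:E) | z in [set z : R | 0 < z /\
      forall Delta : R, 0 < Delta -> random_zero_set d S Delta z p]].

(* Main.v *)
Require Import Defs.
From HB Require Import structures.
From mathcomp Require Import all_boot all_order all_algebra.
From mathcomp Require Import boolp classical_sets reals constructive_ereal ereal.
From mathcomp Require Import lra.
Import Order.TTheory GRing.Theory Num.Theory.
Set Implicit Arguments. Unset Strict Implicit.
Local Open Scope ring_scope.

Definition fdist (R : realType) (T : finType) (d : T -> T -> R) (L : R)
  (Z : {set T}) (x : T) : R := \big[Num.min/L]_(z in Z) d x z.

Lemma fdist_lip (R : realType) (T : finType) (d : T -> T -> R)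
  (hd : is_metric d) (L : R) (Z : {set T}) (x y : T) : 0 <= L ->
  fdist d L Z x <= fdist d L Z y + d x y.
Proof.
case: hd => h0 _ hs ht hL.
rewrite -lerBlDr; apply: le_bigmin.
  rewrite lerBlDr; apply: (le_trans (bigmin_le_id _ _ _ _)).
  by rewrite lerDl.
move=> z zZ; rewrite lerBlDl.
apply: (le_trans (bigmin_le_cond _ _ zZ)); exact: ht.
Qed.

Lemma fdist_ge0 (R : realType) (T : finType) (d : T -> T -> R)
  (hd : is_metric d) (L : R) (Z : {set T}) (x : T) : 0 <= L -> 0 <= fdist d L Z x.
Proof. case: hd => h0 _ _ _ hL; apply: le_bigmin => // *; exact: h0. Qed.

Lemma fdist_in (R : realType) (T : finType) (d : T -> T -> R)
  (hd : is_metric d) (L : R) (Z : {set T}) (y : T) : 0 <= L -> y \in Z -> fdist d L Z y = 0.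
Proof.
move=> hL yZ; apply/eqP; rewrite eq_le fdist_ge0 // andbT.
have := bigmin_le_cond L (fun z => d y z) yZ.
by case: hd => _ h1 _ _; rewrite (proj2 (h1 y y) erefl).
Qed.

Lemma fdist_far (R : realType) (T : finType) (d : T -> T -> R)
  (L : R) (Z : {set T}) (x : T) : (forall z, z \in Z -> L <= d x z) -> fdist d L Z x = L.
Proof.
move=> h; apply/eqP; rewrite eq_le bigmin_le_id /=.
by apply: le_bigmin => // z /h.
Qed.

Definition phimap (R : realType) (T : finType) (d : T -> T -> R) (L : R)
  n (w : 'I_n -> R) (Zs : 'I_n -> {set T}) (x : T) : 'rV[R]_n :=
  \row_(i < n) (Num.sqrt (w i) * fdist d L (Zs i) x).

Lemma phimap_sq (R : realType) (T : finType) (d : T -> T -> R) (L : R)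
  n (w : 'I_n -> R) (Zs : 'I_n -> {set T}) x y :
  (forall i, 0 <= w i) ->
  \sum_(i < n) ((phimap d L w Zs x - phimap d L w Zs y) 0 i) ^+ 2 =
  \sum_(i < n) w i * (fdist d L (Zs i) x - fdist d L (Zs i) y) ^+ 2.
Proof.
move=> hw; apply: eq_bigr => i _; rewrite !mxE -mulrBr exprMn sqr_sqrtr //.
Qed.

Lemma phimap_lip (R : realType) (T : finType) (d : T -> T -> R)
  (hd : is_metric d) (L : R) n (w : 'I_n -> R) (Zs : 'I_n -> {set T}) x y :
  0 <= L -> (forall i, 0 <= w i) -> \sum_i w i = 1 ->
  l2norm (phimap d L w Zs x - phimap d L w Zs y) <= d x y.
Proof.
move=> hL hw hs; rewrite /l2norm phimap_sq //.
have hd0 : 0 <= d x y by case: hd.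
rewrite -(ger0_norm hd0) -sqrtr_sqr ler_sqrt ?sqr_ge0 //.
rewrite -[X in _ <= X]mul1r -hs mulr_suml; apply: ler_sum => i _.
apply: ler_wpM2l => //.
have h1 := fdist_lip hd (Zs i) x y hL.
have h2 := fdist_lip hd (Zs i) y x hL.
have : d y x = d x y by case: hd => _ _ hsy _.
move=> e; rewrite e in h2.
set a := fdist _ _ _ x in h1 h2 *; set b := fdist _ _ _ y in h1 h2 *.
nra.
Qed.

Lemma phimap_low (R : realType) (T : finType) (d : T -> T -> R)
  (hd : is_metric d) (L : R) n (w : 'I_n -> R) (Zs : 'I_n -> {set T}) x y :
  0 <= L -> (forall i, 0 <= w i) ->
  Num.sqrt (\sum_(i | (y \in Zs i) && [forall z in Zs i, L <= d x z]) w i) * L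
   <= l2norm (phimap d L w Zs x - phimap d L w Zs y).
Proof.
move=> hL hw; rewrite /l2norm phimap_sq //.
rewrite -[L in _ * L](ger0_norm hL) -sqrtr_sqr -sqrtrM ?sumr_ge0 //.
rewrite ler_sqrt ?sumr_ge0 // => [|i _]; last by rewrite mulr_ge0 ?sqr_ge0.
rewrite mulr_suml [X in _ <= X](bigID (fun i => (y \in Zs i) && [forall z in Zs i, L <= d x z])) /=.
rewrite -[X in X <= _]addr0 lerD ?sumr_ge0 // => [|i _]; last by rewrite mulr_ge0 ?sqr_ge0.
apply: ler_sum => i /andP [yZ /forall_inP hx].
rewrite (fdist_in hd hL yZ) subr0 fdist_far //.
Qed.

Lemma sum_enum (R : realType) (T : finType) (F : {set T} -> R) P :
  \sum_(Z : {set T} | P Z) F Z = \sum_(i < #|{set T}| | P (enum_val i)) F (enum_val i).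
Proof. rewrite -big_enum_val_cond; apply: eq_bigl => Z; by rewrite inE. Qed.

Theorem lemma3p5 (R : realType) (T : finType) (d : T -> T -> R)
  (hd : is_metric d) (S : {set T}) (p tau : R)
  (hp0 : 0 < p) (hp1 : p < 1) (htau : 0 < tau) :
  exists (n : nat) (phi : T -> 'rV[R]_n),
    (forall x y, l2norm (phi x - phi y) <= d x y) /\
    (forall x y, x \in S -> y \in S -> tau <= d x y ->
       ((tau * Num.sqrt p)%:E <= zeta_sp d S p * (l2norm (phi x - phi y))%:E)%E).
Proof.
have hd0 : forall x y, 0 <= d x y by case: hd.
case: (pselect (exists x0 y0, [/\ x0 \in S, y0 \in S & tau <= d x0 y0]))
  => [[x0 [y0 [x0S y0S hxy0]]]|nex]; last first.
  exists 0%N, (fun _ => 0); split.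
    move=> x y; rewrite /l2norm big_ord0 sqrtr0; exact: hd0.
  by move=> x y xS yS h; exfalso; apply: nex; exists x, y.
set A := [set z : R | 0 < z /\ forall Delta : R, 0 < Delta -> random_zero_set d S Delta z p]%classic.
have hze : zeta_sp d S p = ereal_inf [set z%:E | z in A]%classic by [].
case: (pselect (exists z, A z)) => [[z1 Az1]|nA]; last first.
  have -> : zeta_sp d S p = +oo%E.
    rewrite hze; have -> : [set z%:E | z in A]%classic = set0.
      by apply/seteqP; split => // t [z Az _]; exfalso; apply: nA; exists z.
    exact: ereal_inf0.
  have nT : (0 < #|T|)%N by apply/card_gt0P; exists x0.
  pose w := fun i : 'I_#|T| => (#|T|%:R)^-1 : R.
  have hw : forall i, 0 <= w i by move=> i; rewrite /w invr_ge0 ler0n.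
  pose Zs := fun i : 'I_#|T| => [set enum_val i].
  exists #|T|, (phimap d tau w Zs); split.
    move=> x y; apply: phimap_lip => //; first exact: ltW.
    by rewrite /w sumr_const card_ord -[_ *+ _]mulr_natr mulVf // pnatr_eq0 -lt0n.
  move=> x y xS yS hxy.
  have hpos : 0 < l2norm (phimap d tau w Zs x - phimap d tau w Zs y).
    apply: lt_le_trans (@phimap_low _ _ _ hd tau _ w Zs x y (ltW htau) hw).
    apply: mulr_gt0 => //; rewrite sqrtr_gt0.
    rewrite (bigD1 (enum_rank y)) /=; last first.
      rewrite /Zs enum_rankK !inE eqxx /=; apply/forall_inP => z.
      by rewrite !inE => /eqP ->.
    apply: (@lt_le_trans _ _ (w (enum_rank y))); first by rewrite invr_gt0 ltr0n.
    by rewrite lerDl sumr_ge0.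
  by rewrite gt0_mulye ?lte_fin // leey.
have hDpos : 0 < d x0 y0 by apply: lt_le_trans htau hxy0.
have Apos : forall z, A z -> tau / d x0 y0 <= z.
  move=> z [z0 hz]; have [mu [_ hmu]] := hz tau htau.
  have := hmu x0 y0 x0S y0S hxy0.
  rewrite ler_pdivrMr //.
  case: (leP tau (z * d x0 y0)) => // hlt.
  rewrite big1 => [|Z /andP [yZ /forall_inP h]]; first by rewrite leNgt hp0.
  exfalso; have := h _ yZ; rewrite ler_pdivrMr // => h'.
  by move: hlt; rewrite mulrC ltNge h'.
have lbe : (((tau / d x0 y0)%:E) <= zeta_sp d S p)%E.
  by rewrite hze; apply: le_ereal_inf_tmp => _ [z Az <-]; rewrite lee_fin; exact: Apos.
have ube : (zeta_sp d S p <= z1%:E)%E.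
  by rewrite hze; apply: ereal_inf_lbound; exists z1.
have [r her] : exists r, zeta_sp d S p = r%:E.
  move: lbe ube; case: (zeta_sp d S p) => [x _ _| |]; first by exists x.
    by rewrite leye_eq.
  by rewrite leeNy_eq.
rewrite her lee_fin in lbe.
have rpos : 0 < r by apply: lt_le_trans lbe; rewrite divr_gt0.
pose L := tau / r.
have Lpos : 0 < L by rewrite divr_gt0.
have wvL : \big[Num.max/0]_(u : T * T | d u.1 u.2 < L) d u.1 u.2 < L.
  by apply: bigmax_lt => // u.
have wvle : forall x z, d x z < L ->
    d x z <= \big[Num.max/0]_(u : T * T | d u.1 u.2 < L) d u.1 u.2.
  by move=> x z h; exact: (le_bigmax_cond 0 (j := (x, z)) (fun u : T * T => d u.1 u.2) h).
move: wvL wvle; set wv := \big[Num.max/0]_(u : T * T | d u.1 u.2 < L) d u.1 u.2 => wvL wvle.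
pose b := if 0 < wv then tau / wv else r + 1.
have rb : r < b.
  rewrite /b; case: ifP => hw; last by rewrite ltrDl.
  by rewrite ltr_pdivlMr // mulrC -ltr_pdivlMr.
have : (zeta_sp d S p < b%:E)%E by rewrite her lte_fin.
rewrite hze => /ereal_inf_lt [_ [z2 Az2 <-]]; rewrite lte_fin => z2b.
have rz2 : r <= z2.
  by rewrite -lee_fin -her hze; apply: ereal_inf_lbound; exists z2.
have z2pos : 0 < z2 := Az2.1.
have wz2 : wv < tau / z2.
  move: z2b; rewrite /b; case: ifP => hw z2b; last first.
    by apply: le_lt_trans (_ : 0 < _); [rewrite leNgt hw | rewrite divr_gt0].
  by rewrite ltr_pdivlMr // mulrC -ltr_pdivlMr.
have [mu [[mu0 _ mu1] hmu]] := Az2.2 tau htau.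
pose w := fun i : 'I_#|{set T}| => mu (enum_val i).
have hw : forall i, 0 <= w i by move=> i; exact: mu0.
exists #|{set T}|, (phimap d L w enum_val); split.
  move=> x y; apply: phimap_lip => //; first exact: ltW.
  by rewrite /w -(sum_enum _ xpredT).
move=> x y xS yS hxy.
have hlow := @phimap_low _ _ _ hd L _ w enum_val x y (ltW Lpos) hw.
have hpl : p <= \sum_(i < #|{set T}| | (y \in (enum_val i : {set T})) && [forall z in (enum_val i : {set T}), L <= d x z]) w i.
  apply: le_trans (hmu x y xS yS hxy) _.
  rewrite /w -(sum_enum mu (fun Z : {set T} => (y \in Z) && [forall z in Z, L <= d x z])).
  rewrite [X in X <= _]big_mkcond [X in _ <= X]big_mkcond /=.
  apply: ler_sum => Z _.
  case: ifP => [/andP [yZ /forall_inP h]|]; last by move=> _; case: ifP.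
  rewrite yZ /=; case: ifP => // /forall_inP [] z zZ.
  have := h z zZ; case: (ltP (d x z) L) => // hlt hge.
  by move: (le_lt_trans (wvle _ _ hlt) wz2); rewrite ltNge hge.
rewrite -hze her -EFinM lee_fin.
apply: le_trans (_ : r * (Num.sqrt p * L) <= _).
  by rewrite /L mulrCA [r * _]mulrCA mulfV ?gt_eqF // mulr1 mulrC.
rewrite ler_pM2l //; apply: le_trans hlow.
by rewrite ler_pM2r // ler_sqrt // (le_trans (ltW hp0) hpl).
Qed.
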